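(* Let $G$ be a graph and let $L$ be a set of specified leaks on $V(G)$ with $I(L)=1$. Then a set $B\subseteq V(G)$ is an $L$-leaky forcing set of $G$ if and only if $B$ is a specified $1$-leaky forcing set of $G$.
   Context: All graphs are finite, simple and undirected. Zero forcing: a blue vertex $u$ with exactly one white neighbor $w$ may force $w$ (color it blue), written $u\to w$. A specified leak on $V(G)$ is an ordered pair $x\to y$ of vertices, meaning $x$ (the tail) is prohibited from forcing $y$ (the head). For a set $L$ of specified leaks, $T(L)$ and $H(L)$ denote its sets of tails and heads. $B$ is a specified $\ell$-leaky forcing set if for every set of at most $\ell$ specified leaks, exhaustively applying the forcing rule from initial blue set $B$ without performing prohibited forces colors all of $V(G)$ blue. Two sets $L_1,L_2$ of specified leaks on $V(G)$ are isomorphic if there is a bijection $\phi:V(G)\to V(G)$ with $x\to y\in L_1$ iff $\phi(x)\to\phi(y)\in L_2$. $B$ is an $L$-leaky forcing set if $B$ colors all of $G$ blue despite any set $L_1$ of specified leaks isomorphic to some subset $L_2\subseteq L$. A set $L$ of specified leaks is independent if $|T(L)|=|L|$ and $T(L)\cap H(L)=\varnothing$; $I(L)$ is the maximum size of an independent subset of $L$. *)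

(* Defs.v *)
From mathcomp Require Import all_boot all_fingroup.
Set Implicit Arguments. Unset Strict Implicit. Unset Printing Implicit Defensive.

(* A graph is a symmetric irreflexive relation e on a finType T.
   A specified leak x -> y is the ordered pair (x, y) : T * T; a set of
   specified leaks is a {set T * T}. *)

Section Leaky.
Variable T : finType.
Variable e : rel T.

Definition force_step (L : {set T * T}) (S S' : {set T}) : Prop :=
  exists u w, [/\ u \in S, w \notin S, e u w,
    (forall v, e u v -> v != w -> v \in S)
    & (u, w) \notin L /\ S' = w |: S].

Inductive reachable (L : {set T * T}) (B : {set T}) : {set T} -> Prop :=
| reach_refl : reachable L B B
| reach_step S S' : reachable L B S -> force_step L S S' -> reachable L B S'.

Definition stuck (L : {set T * T}) (S : {set T}) : Prop :=
  forall S', ~ force_step L S S'.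

Definition forces_despite (L : {set T * T}) (B : {set T}) : Prop :=
  forall S, reachable L B S -> stuck L S -> S = [set: T].

Definition specified_leaky_forcing (l : nat) (B : {set T}) : Prop :=
  forall L : {set T * T}, #|L| <= l -> forces_despite L B.

(* Isomorphism of sets of specified leaks (bijection of V(G), not
   necessarily a graph automorphism). *)
Definition leaks_iso (L1 L2 : {set T * T}) : Prop :=
  exists phi : {perm T}, forall x y, ((x, y) \in L1) = ((phi x, phi y) \in L2).

Definition L_leaky_forcing (L : {set T * T}) (B : {set T}) : Prop :=
  forall L1 L2 : {set T * T}, L2 \subset L -> leaks_iso L1 L2 ->
    forces_despite L1 B.

End Leaky.

Definition tails (T : finType) (L : {set T * T}) : {set T} := [set p.1 | p in L].
Definition heads (T : finType) (L : {set T * T}) : {set T} := [set p.2 | p in L].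

Definition independent_leaks (T : finType) (L : {set T * T}) : bool :=
  (#|tails L| == #|L|) && [disjoint tails L & heads L].

Definition indep_number (T : finType) (L : {set T * T}) : nat :=
  \max_(L' : {set T * T} | (L' \subset L) && independent_leaks L') #|L'|.

(* Main.v *)
Require Import Defs.
From mathcomp Require Import all_boot all_fingroup.
Set Implicit Arguments. Unset Strict Implicit. Unset Printing Implicit Defensive.

Section Helpers.
Variable T : finType.
Variable e : rel T.

Definition blocked (S : {set T}) : {set T * T} :=
  [set p | [&& p.1 \in S, p.2 \notin S, e p.1 p.2 &
     [forall v, e p.1 v ==> (v != p.2) ==> (v \in S)]]].

Lemma reach_mono (L : {set T * T}) (B S : {set T}) : reachable e L B S -> B \subset S.
Proof.
elim=> [|S1 S2 _ IH [u [w [_ _ _ _ [_ ->]]]]]; first exact: subxx.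
by apply: (subset_trans IH); apply/subsetP=> x hx; rewrite in_setU1 hx orbT.
Qed.

Lemma reach_transfer (L L' : {set T * T}) (B S : {set T}) : reachable e L B S ->
  (forall u w, w \in S -> (u, w) \in L' -> (u, w) \in L) -> reachable e L' B S.
Proof.
elim=> [|S1 S2 _ IH [u [w [hu hw he hv [hL ->]]]]] H; first exact: reach_refl.
apply: reach_step (IH _) _.
  move=> u' w' hw' hL'; apply: H hL'; by rewrite in_setU1 hw' orbT.
exists u, w; split=> //; split=> //.
apply/negP=> /(H u w); rewrite in_setU1 eqxx => /(_ isT); exact/negP.
Qed.

Lemma blocked_sub (L : {set T * T}) (S : {set T}) : stuck e L S -> blocked S \subset L.
Proof.
move=> hs; apply/subsetP=> -[u w]; rewrite inE /= => /and4P[hu hw he /forallP hv].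
apply/negPn/negP=> hL; apply: (hs (w |: S)); exists u, w; split=> //.
  by move=> v hev hvw; move: (hv v); rewrite hev hvw.
Qed.

Lemma blocked_reach (L : {set T * T}) (B S : {set T}) : reachable e L B S -> reachable e (blocked S) B S.
Proof.
move=> hr; apply: reach_transfer hr _ => u w hw; rewrite inE /= hw.
by rewrite !andbF.
Qed.

Lemma blocked_stuck (S : {set T}) : stuck e (blocked S) S.
Proof.
move=> S' [u [w [hu hw he hv [hL _]]]]; move/negP: hL; apply.
rewrite inE /= hu hw he /=; apply/forallP=> v; apply/implyP=> hev; apply/implyP.
exact: hv.
Qed.

Lemma blocked_tail (S : {set T}) (p q : T * T) : p \in blocked S -> q \in blocked S -> p.1 = q.1 -> p = q.
Proof.
case: p q => [u w] [u' w']; rewrite !inE /= => /and4P[hu hw he /forallP hv]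
  /and4P[_ hw' he' _] eu; subst u'.
case: (eqVneq w w') => [->//|hne].
by move: (hv w'); rewrite he' eq_sym hne /= (negbTE hw').
Qed.

End Helpers.

Lemma indep_two (T : finType) (L : {set T * T}) (a1 b1 a2 b2 : T) :
  (a1, b1) \in L -> (a2, b2) \in L -> a1 != a2 ->
  [/\ a1 != b1, a1 != b2, a2 != b1 & a2 != b2] -> 1 < indep_number L.
Proof.
move=> h1 h2 na [n11 n12 n21 n22].
pose L' := [set (a1, b1); (a2, b2)].
have hT : tails L' = [set a1; a2].
  apply/setP=> x; rewrite !inE; apply/imsetP/idP.
    by case=> -[y z]; rewrite !inE => /orP[] /eqP[-> ->] ->; rewrite eqxx ?orbT.
  by case/orP=> /eqP->; [exists (a1, b1) | exists (a2, b2)]; rewrite ?inE ?eqxx ?orbT.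
have hH : heads L' = [set b1; b2].
  apply/setP=> x; rewrite !inE; apply/imsetP/idP.
    by case=> -[y z]; rewrite !inE => /orP[] /eqP[-> ->] ->; rewrite eqxx ?orbT.
  by case/orP=> /eqP->; [exists (a1, b1) | exists (a2, b2)]; rewrite ?inE ?eqxx ?orbT.
have cL : #|L'| = 2.
  by rewrite cards2; case: eqP => // -[] /eqP; rewrite (negbTE na).
have : #|L'| <= indep_number L.
  rewrite /indep_number; apply: (leq_bigmax_cond (F := fun X : {set T * T} => #|X|)).
  apply/andP; split.
    by apply/subsetP=> p; rewrite !inE => /orP[] /eqP->.
  rewrite /independent_leaks hT hH cL cards2 na /=.
  apply/pred0P=> x /=; rewrite !inE.
  by apply/negP=> /andP[/orP[] /eqP hx /orP[] /eqP hy]; move: n11 n12 n21 n22; rewrite -hx -hy eqxx.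
by rewrite cL.
Qed.

Lemma indep_one (T : finType) (L : {set T * T}) : indep_number L = 1 ->
  exists a b, [/\ (a, b) \in L & a != b].
Proof.
move=> hL.
have h0 : (set0 \subset L) && independent_leaks (set0 : {set T * T}).
  rewrite sub0set /independent_leaks /tails /heads !imset0 !cards0 /=.
  by apply/pred0P=> x; rewrite /= inE.
move: hL; rewrite /indep_number (@bigmax_eq_arg _ set0 (fun X : {set T * T} => (X \subset L) && independent_leaks X) (fun X : {set T * T} => #|X|) h0).
case: arg_maxnP => // L' /andP[sL /andP[_ hd]] _ /eqP /cards1P [[a b] hab].
exists a, b; split; first by apply: (subsetP sL); rewrite hab inE.
apply/negP=> /eqP eab; subst b.
move/pred0P: hd => /(_ a); rewrite /= /tails /heads hab !imset_set1 !inE eqxx //.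
Qed.

Theorem proposition5p2 (T : finType) (e : rel T)
  (e_sym : symmetric e) (e_irr : irreflexive e)
  (L : {set T * T}) (hL : indep_number L = 1) (B : {set T}) :
  L_leaky_forcing e L B <-> specified_leaky_forcing e 1 B.
Proof.
split.
- move=> hLL L1 cL1 S hr hs.
  have sP := blocked_sub hs.
  have hr' := blocked_reach hr.
  have hs' := @blocked_stuck _ e S.
  have : #|blocked e S| <= 1 by apply: leq_trans (subset_leq_card sP) cL1.
  rewrite leq_eqVlt ltnS leqn0 => /orP[/cards1P[[u w] hP] | /eqP/cards0_eq hP].
  + have uS : u \in S /\ w \notin S.
      have : (u, w) \in blocked e S by rewrite hP inE.
      by rewrite inE => /and4P[].
    case: uS => uS wS.
    have uw : u != w by apply/negP=> /eqP eu; move: wS; rewrite -eu uS.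
    have [a [b [hab ab]]] := indep_one hL.
    pose s1 := tperm u a.
    pose w' := s1 w.
    have w'a : w' != a.
      by rewrite /w' /s1 -{2}(tpermL u a) (inj_eq perm_inj) eq_sym.
    pose phi := (s1 * tperm w' b)%g.
    have pu : phi u = a.
      by rewrite /phi permM /s1 tpermL tpermD // eq_sym.
    have pw : phi w = b by rewrite /phi permM -/w' tpermL.
    apply: (hLL (blocked e S) [set (a, b)] _ _ S hr' hs').
      by rewrite sub1set.
    exists phi => x y; rewrite hP !inE -pu -pw !xpair_eqE !(inj_eq perm_inj).
    by [].
  + apply: (hLL set0 set0 _ _ S); first exact: sub0set.
      by exists 1%g => x y; rewrite !inE.
      by rewrite -hP.
    by rewrite -hP.
- move=> h1 L1 L2 sL [phi hphi] S hr hs.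
  have sP := blocked_sub hs.
  apply: (h1 (blocked e S) _ S (blocked_reach hr) (@blocked_stuck _ e S)).
  rewrite leqNgt; apply/negP=> /card_gt1P [[u1 w1] [[u2 w2] [p1 p2 ne]]].
  have t12 : u1 != u2.
    by apply/negP=> /eqP eu; move/negP: ne; apply; apply/eqP; exact: blocked_tail p1 p2 eu.
  move: (p1) (p2); rewrite !inE /= => /and4P[u1S w1S _ _] /and4P[u2S w2S _ _].
  have nS x y : x \in S -> y \notin S -> phi x != phi y.
    by move=> hx hy; rewrite (inj_eq perm_inj); apply/negP=> /eqP exy; move: hy; rewrite -exy hx.
  have: 1 < indep_number L.
    apply: (indep_two (a1 := phi u1) (b1 := phi w1) (a2 := phi u2) (b2 := phi w2)).
    - by apply: (subsetP sL); rewrite -hphi (subsetP sP).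
    - by apply: (subsetP sL); rewrite -hphi (subsetP sP).
    - by rewrite (inj_eq perm_inj).
    - by split; apply: nS.
  by rewrite hL.
Qed.
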